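(* For every positive integer $n$, the map $\Psi_{\mathrm{PF}\to\mathrm{Luk}}$ restricts to a bijection $\mathrm{UPF}_n^{\mathrm{inc}}\to\mathrm{Motz}_n^{\le 1}$. Moreover, $|\mathrm{UPF}_n^{\mathrm{inc}}|=|\mathrm{Motz}_n^{\le 1}|=2^{n-1}$.
   Context: Let $[n]=\{1,\dots,n\}$. A parking preference is $p=(p_1,\dots,p_n)\in[n]^n$; cars $1,\dots,n$ enter in order and car $i$ parks in the first unoccupied spot $k\ge p_i$ among spots $1,\dots,n$, failing if there is none. $p$ is a parking function if all cars park. If car $i$ parks in spot $o_i$, its displacement is $d_i=o_i-p_i$. A parking function is unit-interval if $\max_i d_i\le 1$. $\mathrm{UPF}_n^{\mathrm{inc}}$ is the set of unit-interval parking functions with $p_1\le\dots\le p_n$. A Łukasiewicz word of length $n$ is a sequence $\ell=(\ell_1,\dots,\ell_n)$ of integers $\ell_i\ge-1$ with $h(\ell;k):=\sum_{i=1}^k\ell_i\ge0$ for all $k\in[n]$ and $h(\ell;n)=0$ (viewed as the lattice path from $(0,0)$ with steps $(\ell_i+1,\ell_i)$). It is a Motzkin path if all $\ell_i\le 1$. $\mathrm{Motz}_n^{\le1}$ is the set of Motzkin paths of length $n$ of height at most one, i.e. with $h(\ell;k)\le 1$ for all $k$. $\Psi_{\mathrm{PF}\to\mathrm{Luk}}(p)=(\ell_1,\dots,\ell_n)$ with $\ell_i=|\{k\in[n]: p_k=i\}|-1$. *)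

(* Defs.v *)
From mathcomp Require Import all_boot all_order all_algebra.
Set Implicit Arguments. Unset Strict Implicit. Unset Printing Implicit Defensive.
Import GRing.Theory Num.Theory.

(* Spots and preferences are the naturals 1..n; a preference is a seq nat. *)

Definition first_free (n : nat) (occ : seq nat) (a : nat) : option nat :=
  ohead [seq k <- iota a (n.+1 - a) | k \notin occ].

Fixpoint park_aux (n : nat) (occ : seq nat) (p : seq nat) : option (seq nat) :=
  match p with
  | [::] => Some [::]
  | a :: p' =>
      match first_free n occ a with
      | None => None
      | Some k => omap (cons k) (park_aux n (k :: occ) p')
      end
  end.

Definition outcome (n : nat) (p : seq nat) : option (seq nat) := park_aux n [::] p.

Definition is_pref (n : nat) (p : seq nat) : bool :=
  (size p == n) && all (fun a => (1 <= a <= n)%N) p.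

Definition is_PF (n : nat) (p : seq nat) : bool :=
  is_pref n p && (outcome n p != None).

Definition is_UPF (n : nat) (p : seq nat) : bool :=
  is_pref n p &&
  (match outcome n p with
   | None => false
   | Some o => all (fun op => (op.1 - op.2 <= 1)%N) (zip o p)
   end).

Definition is_UPF_inc (n : nat) (p : seq nat) : bool :=
  is_UPF n p && sorted leq p.

Local Open Scope ring_scope.

Definition height (l : seq int) (k : nat) : int := \sum_(x <- take k l) x.

Definition is_Luk (n : nat) (l : seq int) : bool :=
  [&& size l == n, all (fun x => -1 <= x) l,
      all (fun k => 0 <= height l k) (iota 1 n) & height l n == 0].

Definition is_Motz (n : nat) (l : seq int) : bool :=
  is_Luk n l && all (fun x => x <= 1) l.

Definition is_Motz_le1 (n : nat) (l : seq int) : bool :=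
  is_Motz n l && all (fun k => height l k <= 1) (iota 1 n).

Definition Psi (n : nat) (p : seq nat) : seq int :=
  [seq (count_mem i p)%N%:Z - 1 | i <- iota 1 n].

Definition has_card (T : eqType) (P : pred T) (c : nat) : Prop :=
  exists s : seq T, [/\ uniq s, forall x, (x \in s) = P x & size s = c].

(* Main.v *)
Require Import Defs.
From mathcomp Require Import all_boot all_order all_algebra zify.
Set Implicit Arguments. Unset Strict Implicit. Unset Printing Implicit Defensive.

Lemma oh_some (P : pred nat) m a k :
  ohead [seq x <- iota a m | P x] = Some k ->
  [/\ a <= k < a + m, P k & forall x, a <= x < k -> ~~ P x].
Proof.
elim: m a => [|m IH] a //=. case: ifP => Pa /=.
- case=> <-; split => //; [lia| move=> x /andP[h1 h2]; lia].
- move/IH => [h1 h2 h3]; split => //; first lia.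
  move=> x hx; case: (x =P a) => [->|nxa]; first by rewrite Pa.
  apply: h3; lia.
Qed.

Lemma oh_spec (P : pred nat) m a c :
  a <= c < a + m -> P c -> (forall x, a <= x < c -> ~~ P x) ->
  ohead [seq x <- iota a m | P x] = Some c.
Proof.
elim: m a => [|m IH] a /=; first lia.
move=> hc Pc hx. case: ifP => Pa /=.
- case: (c =P a) => [->//|nca]. have : ~~ P a by apply: hx; lia. by rewrite Pa.
- case: (c =P a) => [eca|nca]; first by move: Pa; rewrite -eca Pc.
  apply: IH => //; first lia. move=> x hx'; apply: hx; lia.
Qed.

Lemma parkF n q : forall occ o, park_aux n occ q = Some o ->
  [/\ size o = size q, uniq o, all (fun k => k \notin occ) o &
      forall c, all (leq c) q -> all (fun k => c <= k <= n) o].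
Proof.
elim: q => [|a q IH] occ o /=; first by case=> <-.
case E: (first_free n occ a) => [k|] //.
case E2: (park_aux n (k::occ) q) => [o'|] //= [<-].
move/IH: E2 => [s u d r].
have [h1 h2 h3] := oh_some E.
split => /=.
- by rewrite s.
- rewrite u andbT. apply/negP => ko. by move/allP: d => /(_ k ko); rewrite in_cons eqxx.
- rewrite h2 /=. apply/allP => x /(allP d). by rewrite in_cons negb_or => /andP[].
- move=> c /andP[ca cq]. have := r c cq => ->. rewrite andbT. lia.
Qed.

Lemma parkG n q : forall i occ o, (forall k, (k \in occ) = (1 <= k <= i)) ->
  i + size q = n -> sorted leq q -> all (leq 1) q -> park_aux n occ q = Some o ->
  all (fun op => op.1 - op.2 <= 1) (zip o q) ->
  forall j, j < size q -> i + j <= nth 0 q j <= (i + j).+1.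
Proof.
elim: q => [|a q IH] i occ o Hocc Hsz Hs H1 Hp Hd j Hj //=.
have [s u d r] := parkF Hp.
move: Hp => /=.
case E: (first_free n occ a) => [k|] //.
case E2: (park_aux n (k::occ) q) => [o'|] //= [Eo]. subst o.
have Ha : a <= i.+1.
  have Hall : all (leq a) (a :: q).
    rewrite /= leqnn /=. exact: (order_path_min leq_trans Hs).
  have Hr := r a Hall.
  have : size (k :: o') <= size (iota a (n.+1 - a)).
    apply: uniq_leq_size u _ => x /(allP Hr) hx. rewrite mem_iota. lia.
  rewrite size_iota s /= in Hsz *. lia.
have [hk1 hk2 hk3] := oh_some E.
move: H1 => /= /andP[a1 H1].
have Hk : k = i.+1.
  rewrite Hocc in hk2.
  case: (ltngtP k i.+1) => // hk.
  - lia.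
  - have := hk3 i.+1. rewrite Hocc negbK. move=> h. have := h ltac:(lia). lia.
subst k.
move: Hd => /= /andP[da Hd].
case: j Hj => [|j] Hj /=; first lia.
have Hocc' : forall x, (x \in i.+1 :: occ) = (1 <= x <= i.+1).
  move=> x; rewrite in_cons Hocc. lia.
have Hsz' : i.+1 + size q = n by move: Hsz => /=; lia.
have := IH i.+1 (i.+1 :: occ) o' Hocc' Hsz' (path_sorted Hs) H1 E2 Hd j Hj.
lia.
Qed.

Definition Q (i m : nat) (b : seq bool) : seq nat :=
  [seq j.+1 - nth false b j | j <- iota i m].

Lemma Q_park n b : nth false b 0 = false -> forall m i occ,
  (forall k, (k \in occ) = (1 <= k <= i)) -> i + m = n ->
  park_aux n occ (Q i m b) = Some (iota i.+1 m).
Proof.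
move=> Hb0; elim=> [|m IH] i occ Hocc Hn //=.
have Hi : (0 < i) || ~~ nth false b i by case: i {Hocc Hn} => //; rewrite Hb0.
have -> : first_free n occ (i.+1 - nth false b i) = Some i.+1.
  apply: oh_spec.
  - case: (nth false b i) Hi => /=; lia.
  - by rewrite Hocc; lia.
  - move=> x hx; rewrite Hocc negbK. move: hx Hi. case: (nth false b i) => /=; lia.
rewrite (IH i.+1) //; last lia.
move=> x; rewrite in_cons Hocc; lia.
Qed.

Lemma Q_zip b m : forall i, all (fun op => op.1 - op.2 <= 1) (zip (iota i.+1 m) (Q i m b)).
Proof.
elim: m => [|m IH] i //=. rewrite IH andbT. case: (nth false b i) => /=; lia.
Qed.

Lemma Q_path b m : forall i x, x <= i -> path leq x (Q i m b).
Proof.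
elim: m => [|m IH] i x hx //=. apply/andP; split.
- case: (nth false b i) => /=; lia.
- apply: IH. case: (nth false b i) => /=; lia.
Qed.

Lemma b_to_UPF n b : size b = n -> nth false b 0 = false -> is_UPF_inc n (Q 0 n b).
Proof.
move=> Hs Hb0.
apply/andP; split; last first.
  case: n {Hs} => [|n] //=. apply: Q_path. by rewrite Hb0.
apply/andP; split.
  apply/andP; split; first by rewrite size_map size_iota.
  apply/allP => x /mapP [j]; rewrite mem_iota => hj ->.
  case: j hj => [|j] hj; first by rewrite Hb0 /=; lia.
  case: (nth false b j.+1) => /=; lia.
rewrite /outcome (Q_park Hb0 (i := 0)) //; last by case.
exact: Q_zip.
Qed.

Lemma UPF_to_b n p : is_UPF_inc n p ->
  exists b : seq bool, [/\ size b = n, nth false b 0 = false & p = Q 0 n b].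
Proof.
case/andP => /andP [/andP[/eqP Hsz Hall] Hout] Hsort.
case E: (outcome n p) Hout => [o|] // Hd.
have H1 : all (leq 1) p by apply: sub_all Hall => x /andP[].
have G := parkG (i := 0) (occ := [::]) _ _ Hsort H1 E Hd.
have {}G : forall j, j < n -> j <= nth 0 p j <= j.+1.
  move=> j hj. apply: G; rewrite ?Hsz //. by case.
exists [seq nth 0 p j == j | j <- iota 0 n]; split.
- by rewrite size_map size_iota.
- case: (posnP n) => [->//|n0] /=.
  rewrite (nth_map 0) ?size_iota // nth_iota //.
  have : 1 <= nth 0 p 0 by apply: (allP H1); apply: mem_nth; rewrite Hsz.
  by case: (nth 0 p 0).
- apply: (@eq_from_nth _ 0); first by rewrite !size_map size_iota.
  move=> j; rewrite Hsz => hj.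
  rewrite (nth_map 0) ?size_iota // nth_iota // (nth_map 0) ?size_iota // nth_iota //.
  rewrite add0n. have := G j hj. case: eqP => [->|ne] /=; lia.
Qed.

Lemma Q_inj n b1 b2 : size b1 = n -> size b2 = n -> Q 0 n b1 = Q 0 n b2 -> b1 = b2.
Proof.
move=> h1 h2 e. apply: (@eq_from_nth _ false); first by rewrite h1 h2.
move=> j; rewrite h1 => hj.
have := congr1 (fun s => nth 0 s j) e => /=.
rewrite !(nth_map 0) ?size_iota // !nth_iota //.
case: (nth false b1 j); case: (nth false b2 j) => //= h; exfalso; lia.
Qed.

Lemma cnt1 n a c : count (fun j => (j == a) && c) (iota 0 n) = ((a < n) && c).
Proof.
case: c.
- under eq_count => j do rewrite andbT.
  have := count_uniq_mem a (iota_uniq 0 n). rewrite mem_iota add0n /= andbT.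
  exact.
- rewrite andbF. by elim: (iota 0 n) => //= x s ->; rewrite andbF.
Qed.

Import GRing.Theory Num.Theory.
Section IntPart.
Local Open Scope ring_scope.

Definition Lb (n : nat) (b : seq bool) : seq int :=
  [seq ((nth false b i : nat)%:Z) - ((nth false b i.-1 : nat)%:Z) | i <- iota 1 n].

Lemma Psi_Q n b : size b = n -> Psi n (Q 0 n b) = Lb n b.
Proof.
move=> Hs. apply/eq_in_map => i; rewrite mem_iota => hi.
rewrite count_map.
have key : forall j, preim (fun j => (j.+1 - nth false b j)%N) (pred1 i) j =
   predU (fun j => (j == i.-1) && ~~ nth false b i.-1)
         (fun j => (j == i) && nth false b i) j.
  move=> j /=.
  have [->|h1] := eqVneq j i.-1.
    rewrite /=.
    case: (nth false b i.-1) => /=; lia.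
  have [->|h2] := eqVneq j i.
    rewrite /=.
    case: (nth false b i) => /=; lia.
  rewrite /=.
  case: (nth false b j) => /=; lia.
rewrite (eq_count key).
have := count_predUI (fun j => (j == i.-1) && ~~ nth false b i.-1)
         (fun j => (j == i) && nth false b i) (iota 0 n).
have -> : count (predI (fun j => (j == i.-1) && ~~ nth false b i.-1)
         (fun j => (j == i) && nth false b i)) (iota 0 n) = 0%N.
  rewrite (eq_count (a2 := pred0)) ?count_pred0 // => j /=.
  case: (eqVneq j i) => [->|]; last by rewrite !andbF.
  have -> : (i == i.-1) = false by lia. by [].
rewrite addn0 => ->. rewrite !cnt1.
have -> : (i.-1 < n)%N = true by lia.
have -> : ((i < n)%N && nth false b i) = nth false b i.
  case: (ltnP i n) => h //. by rewrite nth_default ?Hs.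
case: (nth false b i.-1); case: (nth false b i) => //=.
Qed.

Lemma tele (u : nat -> int) k : \sum_(i <- iota 1 k) (u i - u i.-1) = u k - u 0%N.
Proof.
elim: k => [|k IH]; first by rewrite big_nil subrr.
have -> : iota 1 k.+1 = iota 1 k ++ [:: k.+1].
  by have := iotaD 1 k 1; rewrite addn1 add1n.
rewrite big_cat /= IH big_seq1 /=. lia.
Qed.

Lemma height_Lb n b k : (k <= n)%N -> height (Lb n b) k = (nth false b k : nat)%:Z - (nth false b 0 : nat)%:Z.
Proof.
move=> hk. rewrite /height /Lb -map_take take_iota.
have -> : minn k n = k by lia.
rewrite big_map. exact: (tele (fun i => (nth false b i : nat)%:Z)).
Qed.

Lemma Lb_motz n b : size b = n -> nth false b 0 = false -> is_Motz_le1 n (Lb n b).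
Proof.
move=> Hs Hb0.
have Hh : forall k, (k <= n)%N -> height (Lb n b) k = (nth false b k : nat)%:Z.
  by move=> k hk; rewrite height_Lb // Hb0 subr0.
have Hx : forall x, x \in Lb n b -> (-1 <= x) && (x <= 1).
  move=> x /mapP [i _ ->].
  by case: (nth false b i); case: (nth false b i.-1).
rewrite /is_Motz_le1 /is_Motz /is_Luk size_map size_iota eqxx /=.
rewrite -!andbA. apply/and5P; split.
- by apply/allP => x /Hx /andP[].
- apply/allP => k; rewrite mem_iota => hk. rewrite Hh; last lia. by [].
- by rewrite Hh // nth_default ?Hs.
- by apply/allP => x /Hx /andP[].
- apply/allP => k; rewrite mem_iota => hk. rewrite Hh; last lia.
  by case: (nth false b k).
Qed.

Lemma height_S (l : seq int) k : (k < size l)%N -> height l k.+1 = height l k + nth 0 l k.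
Proof. by move=> hk; rewrite /height (take_nth 0) // -cats1 big_cat big_seq1. Qed.

Lemma height0 (l : seq int) : height l 0 = 0.
Proof. by rewrite /height take0 big_nil. Qed.

Lemma surj n l : (0 < n)%N -> is_Motz_le1 n l -> exists2 p, is_UPF_inc n p & Psi n p = l.
Proof.
move=> n0.
case/andP => /andP [/and4P [/eqP Hsz Hm1 Hh0 /eqP Hn] Hle1] Hh1.
set b := [seq height l k == 1 | k <- iota 0 n].
have Hb : size b = n by rewrite size_map size_iota.
have Hb0 : nth false b 0 = false.
  by rewrite (nth_map 0) ?size_iota // nth_iota // height0.
have Hu : forall k, (k <= n)%N -> (nth false b k : nat)%:Z = height l k.
  move=> k hk. case: (ltnP k n) => hkn.
  - rewrite (nth_map 0) ?size_iota // nth_iota // add0n.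
    have [h0 h1] : 0 <= height l k /\ height l k <= 1.
      case: k hk hkn => [|k] hk hkn; first by rewrite height0.
      split; [apply: (allP Hh0) | apply: (allP Hh1)]; rewrite mem_iota; lia.
    case: eqP => [->//|ne] /=. lia.
  - have -> : k = n by lia. by rewrite nth_default ?Hb // Hn.
exists (Q 0 n b); first exact: b_to_UPF.
rewrite Psi_Q //. apply: (@eq_from_nth _ 0); first by rewrite size_map size_iota Hsz.
move=> j; rewrite size_map size_iota => hj.
rewrite (nth_map 0) ?size_iota // nth_iota // add1n /= Hu // Hu; last lia.
rewrite height_S ?Hsz //. by rewrite addrAC subrr add0r.
Qed.

Lemma Psi_inj n : {in is_UPF_inc n &, injective (Psi n)}.
Proof.
move=> p1 p2; rewrite -!topredE => /UPF_to_b [b1 [s1 z1 ->]] /UPF_to_b [b2 [s2 z2 ->]].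
rewrite !Psi_Q // => e. congr Q. apply: (@eq_from_nth _ false); first by rewrite s1 s2.
move=> k; rewrite s1 => hk.
have := congr1 (fun l => height l k) e => /=.
rewrite !height_Lb ?z1 ?z2 ?subr0; try lia.
Qed.

End IntPart.

Theorem theorem3p2 (n : nat) : (0 < n)%N ->
  [/\ (forall p, is_UPF_inc n p -> is_Motz_le1 n (Psi n p)),
      {in is_UPF_inc n &, injective (Psi n)},
      (forall l, is_Motz_le1 n l -> exists2 p, is_UPF_inc n p & Psi n p = l),
      has_card (is_UPF_inc n) (2 ^ (n - 1))
    & has_card (is_Motz_le1 n) (2 ^ (n - 1))].
Proof.
move=> n0.
have P1 : forall p, is_UPF_inc n p -> is_Motz_le1 n (Psi n p).
  by move=> p /UPF_to_b [b [s z ->]]; rewrite Psi_Q //; apply: Lb_motz.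
have P3 := surj n0.
set s := [seq Q 0 n (false :: val t) | t <- enum {: (n - 1).-tuple bool}].
have Hs : forall x, (x \in s) = is_UPF_inc n x.
  move=> x; apply/mapP/idP.
  - move=> [t _ ->]. apply: b_to_UPF => //=. rewrite size_tuple. lia.
  - move=> /UPF_to_b [b [sb zb ->]].
    case: b sb zb => [|c b] sb zb; first by move: sb => /= ?; lia.
    rewrite /= in sb zb; subst c.
    have hb : size b == n - 1 by apply/eqP; lia.
    exists (Tuple hb); first by rewrite mem_enum.
    by [].
have Us : uniq s.
  rewrite map_inj_uniq ?enum_uniq // => t1 t2 e.
  apply: val_inj. have := Q_inj _ _ e. rewrite /= !size_tuple.
  have -> : (n - 1).+1 = n by lia. by move=> /(_ erefl erefl) [].
have Ss : size s = 2 ^ (n - 1).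
  by rewrite size_map -cardT card_tuple card_bool.
split => //.
- exact: Psi_inj.
- by exists s.
- exists (map (Psi n) s); split.
  + rewrite map_inj_in_uniq // => p1 p2 h1 h2; apply: Psi_inj; by rewrite -topredE /= -Hs.
  + move=> l; apply/mapP/idP.
    * by move=> [p]; rewrite Hs => /P1 h ->.
    * by move=> /P3 [p hp <-]; exists p; rewrite ?Hs.
  + by rewrite size_map.
Qed.
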